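(* Forgetting the action on $\mathcal M$, $(f_{\mathcal D},f_{\mathcal M})\mapsto f_{\mathcal D}$ and $(\delta_{\mathcal D},\delta_{\mathcal M})\mapsto\delta_{\mathcal D}$, maps $\mathrm{Aut}(\mathcal D,\mathcal M)$ into $\mathrm{Aut}(\mathcal D)_{\mathcal J}$ and $\mathrm{Der}(\mathcal D,\mathcal M)$ into $\mathrm{Der}(\mathcal D)_{\mathcal J}$.
   Context: Let $\Bbbk$ be a field of characteristic zero, $V$ a $2n$-dimensional $\Bbbk$-vector space with symplectic form $\omega$. Let $D$ be the universal enveloping algebra of the Heisenberg Lie algebra $V\oplus\Bbbk\hbar$ ($[x,y]=\omega(x,y)\hbar$, $\hbar$ central), graded with $V$ in degree 1 and $\hbar$ in degree 2; let $\mathcal D=\prod_{i\geq0}D^i$ and $\mathcal A=\mathcal D/\hbar\mathcal D$. Fix a Lagrangian subspace $\mathfrak x\subset V$, let $\mathcal M=\mathcal D/\mathcal D\mathfrak x$, and let $\mathcal J\subset\mathcal D$ be the preimage of the ideal $\mathcal A\mathfrak x$ under $\mathcal D\to\mathcal A$. $\mathrm{Aut}(\mathcal D)$ (resp. $\mathrm{Der}(\mathcal D)$) is the group of $\Bbbk[[\hbar]]$-linear continuous automorphisms (resp. Lie algebra of continuous $\Bbbk[[\hbar]]$-linear derivations) of $\mathcal D$, and $\mathrm{Aut}(\mathcal D)_{\mathcal J}$, $\mathrm{Der}(\mathcal D)_{\mathcal J}$ consist of those $f$ with $f(\mathcal J)\subset\mathcal J$. $\mathrm{Der}(\mathcal D,\mathcal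 M)$ is the Lie algebra of pairs $(\delta_{\mathcal D},\delta_{\mathcal M})$ with $\delta_{\mathcal D}\in\mathrm{Der}(\mathcal D)$ and $\delta_{\mathcal M}:\mathcal M\to\mathcal M$ continuous $\Bbbk[[\hbar]]$-linear with $\delta_{\mathcal M}(um)=\delta_{\mathcal D}(u)m+u\,\delta_{\mathcal M}(m)$; $\mathrm{Aut}(\mathcal D,\mathcal M)$ is the group of pairs $(f_{\mathcal D},f_{\mathcal M})$ with $f_{\mathcal D}\in\mathrm{Aut}(\mathcal D)$ and $f_{\mathcal M}:\mathcal M\to\mathcal M$ a continuous $\Bbbk[[\hbar]]$-linear bijection with $f_{\mathcal M}(um)=f_{\mathcal D}(u)f_{\mathcal M}(m)$. *)

(* Defs.v *)
From HB Require Import structures.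
From mathcomp Require Import all_boot all_order all_algebra.
Set Implicit Arguments. Unset Strict Implicit. Unset Printing Implicit Defensive.
Import Order.TTheory GRing.Theory Num.Theory.
Local Open Scope ring_scope.

(* V = k^N (N = 2n), with basis e_0..e_{N-1}; the symplectic form is
   omega(x,y) = x *m Om *m y^T for row vectors.  The completed algebra
   D = prod_i D^i is modelled, via the (PBW / symmetrisation) isomorphism
   U(heis) ~ (Sym V[hbar], Moyal star product), as formal power series
   in the coordinates x_0..x_{N-1} and hbar:  u mu a = coefficient of
   x^mu hbar^a.  Grading: deg x_i = 1, deg hbar = 2. *)

Definition mono (N : nat) := {ffun 'I_N -> nat}.
Definition series (k : fieldType) (N : nat) := mono N -> nat -> k.

Section Series.
Variables (k : fieldType) (N : nat).
Local Notation S := (series k N).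

Definition mdeg (mu : mono N) : nat := (\sum_(i < N) mu i)%N.
Definition mono0 : mono N := [ffun => 0%N].
Definition munit (i : 'I_N) : mono N := [ffun j => nat_of_bool (j == i)].

Definition szero : S := fun _ _ => 0.
Definition sone : S := fun mu a => ((mu == mono0) && (a == 0%N))%:R.
Definition sadd (u v : S) : S := fun mu a => u mu a + v mu a.
Definition sopp (u : S) : S := fun mu a => - u mu a.
Definition ssub (u v : S) : S := sadd u (sopp v).
Definition sscal (c : k) (u : S) : S := fun mu a => c * u mu a.
Definition hbar : S := fun mu a => ((mu == mono0) && (a == 1%N))%:R.

(* the k[[hbar]]-module structure: (sum_i c_i hbar^i) . u *)
Definition hscale (c : nat -> k) (u : S) : S :=
  fun mu a => \sum_(i < a.+1) c i * u mu (a - i)%N.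

Definition lin (v : 'rV[k]_N) : S :=
  fun mu a => (a == 0%N)%:R * \sum_(i < N) v 0 i * (mu == munit i)%:R.

Definition dpart (i : 'I_N) (f : S) : S :=
  fun mu a => (mu i).+1%:R * f [ffun j => (mu j + nat_of_bool (j == i))%N] a.
Definition diter (s : seq 'I_N) (f : S) : S := foldr dpart f s.

Definition cmul (f g : S) : S :=
  fun mu a => \sum_(a1 < a.+1)
     \sum_(al : {ffun 'I_N -> 'I_(mdeg mu).+1} | [forall i, al i <= mu i]%N)
        f [ffun i => nat_of_ord (al i)] a1 *
        g [ffun i => (mu i - al i)%N] (a - a1)%N.

Variable Om : 'M[k]_N.

(* m-th power of the Poisson bidifferential operator sum_ij Om_ij d_i (x) d_j *)
Definition Bm (m : nat) (f g : S) : S :=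
  fun mu a => \sum_(s : {ffun 'I_m -> 'I_N * 'I_N})
     (\prod_(l < m) Om (s l).1 (s l).2) *
     cmul (diter [seq (s l).1 | l <- enum 'I_m] f)
          (diter [seq (s l).2 | l <- enum 'I_m] g) mu a.

(* Moyal star product: f * g = sum_m (hbar/2)^m / m! B_m(f,g);
   it satisfies [x_i, x_j] = Om_ij hbar, i.e. [x,y] = omega(x,y) hbar. *)
Definition star (f g : S) : S :=
  fun mu a => \sum_(m < a.+1) ((2 ^ m * m`!)%N%:R)^-1 * Bm m f g mu (a - m)%N.

(* the linear topology of prod_i D^i: F_p = elements of degree >= p *)
Definition filt (p : nat) (u : S) : Prop :=
  forall mu a, (mdeg mu + a.*2 < p)%N -> u mu a = 0.

Definition scontinuous (f : S -> S) : Prop :=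
  forall p, exists p', forall u, filt p' u -> filt p (f u).

Definition hlinear (f : S -> S) : Prop :=
  (forall u v, f (sadd u v) = sadd (f u) (f v)) /\
  (forall c u, f (hscale c u) = hscale c (f u)).

Definition AutD (f : S -> S) : Prop :=
  [/\ bijective f, hlinear f, scontinuous f,
      (forall u v, f (star u v) = star (f u) (f v)) & f sone = sone].

Definition DerD (d : S -> S) : Prop :=
  [/\ hlinear d, scontinuous d &
      forall u v, d (star u v) = sadd (star (d u) v) (star u (d v))].

Variable X : 'M[k]_N.  (* row space of X = the Lagrangian subspace x *)

Definition DX (u : S) : Prop :=
  exists w : 'I_N -> S, u = \big[sadd/szero]_(i < N) star (w i) (lin (row i X)).

(* J = preimage of A x under D -> A = D / hbar D *)
Definition Jset (u : S) : Prop :=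
  exists v, DX v /\ exists w, ssub u v = star hbar w.

Definition AutD_J (f : S -> S) : Prop := AutD f /\ (forall u, Jset u -> Jset (f u)).
Definition DerD_J (d : S -> S) : Prop := DerD d /\ (forall u, Jset u -> Jset (d u)).

(* Maps M -> M, M = D / D x, are represented by lifts F : D -> D
   compatible with the congruence modulo D x. *)
Definition eqM (u v : S) : Prop := DX (ssub u v).

Definition Mmap (F : S -> S) : Prop := forall u v, eqM u v -> eqM (F u) (F v).
Definition Mhlinear (F : S -> S) : Prop :=
  (forall u v, eqM (F (sadd u v)) (sadd (F u) (F v))) /\
  (forall c u, eqM (F (hscale c u)) (hscale c (F u))).
Definition Mbijective (F : S -> S) : Prop :=
  (forall u v, eqM (F u) (F v) -> eqM u v) /\ (forall w, exists u, eqM (F u) w).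
(* continuity for the quotient topology on M (images of the F_p) *)
Definition Mcontinuous (F : S -> S) : Prop :=
  forall p, exists p', forall u, filt p' u -> exists v, filt p v /\ eqM (F u) v.

Definition AutDM (f F : S -> S) : Prop :=
  AutD f /\ [/\ Mmap F, Mhlinear F, Mbijective F, Mcontinuous F &
      forall u m, eqM (F (star u m)) (star (f u) (F m))].

Definition DerDM (d dM : S -> S) : Prop :=
  DerD d /\ [/\ Mmap dM, Mhlinear dM, Mcontinuous dM &
      forall u m, eqM (dM (star u m)) (sadd (star (d u) m) (star u (dM m)))].

End Series.

Definition symplectic (k : fieldType) (N : nat) (Om : 'M[k]_N) : Prop :=
  Om^T = - Om /\ \det Om != 0.

Definition lagrangian (k : fieldType) (n : nat) (Om X : 'M[k]_(n.*2)) : Prop :=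
  \rank X = n /\ X *m Om *m X^T = 0.

(* Main.v *)
Require Import Defs.
From HB Require Import structures.
From mathcomp Require Import all_boot all_order all_algebra ring.
From Stdlib Require Import FunctionalExtensionality.
Set Implicit Arguments. Unset Strict Implicit. Unset Printing Implicit Defensive.
Import Order.TTheory GRing.Theory Num.Theory.
Local Open Scope ring_scope.

Section S.
Variables (k : fieldType) (N : nat).
Local Notation mono := (mono N).

Definition pmul (g h : mono -> k) (mu : mono) : k :=
  \sum_(al : {ffun 'I_N -> 'I_(mdeg mu).+1} | [forall i, al i <= mu i]%N)
     g [ffun i => nat_of_ord (al i)] * h [ffun i => (mu i - al i)%N].

Definition mle (a b : mono) := [forall i, a i <= b i]%N.
Definition msub (a b : mono) : mono := [ffun i => (a i - b i)%N].
Definition madd (a b : mono) : mono := [ffun i => (a i + b i)%N].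

Definition box (mu : mono) : seq mono :=
  [seq [ffun i => nat_of_ord (al i)] | al : {ffun 'I_N -> 'I_(mdeg mu).+1} <- enum [pred al : {ffun 'I_N -> 'I_(mdeg mu).+1} | [forall i, al i <= mu i]%N]].

Lemma pmulE g h mu : pmul g h mu = \sum_(b <- box mu) g b * h (msub mu b).
Proof.
rewrite /pmul /box -deprecated_filter_index_enum big_map big_filter.
by apply: eq_bigr => al _; congr (_ * h _); apply/ffunP => i; rewrite !ffunE.
Qed.

Lemma box_uniq mu : uniq (box mu).
Proof.
rewrite map_inj_uniq ?enum_uniq // => a b /ffunP E; apply/ffunP => i.
by apply: val_inj; have := E i; rewrite !ffunE.
Qed.

Lemma le_mdeg (mu : mono) i : (mu i <= mdeg mu)%N.
Proof. by rewrite /mdeg (bigD1 i) //= leq_addr. Qed.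

Lemma mem_box mu b : (b \in box mu) = mle b mu.
Proof.
apply/mapP/forallP => [[al]|H].
  by rewrite mem_enum inE => /forallP H -> i; rewrite ffunE.
have Hb i : (b i < (mdeg mu).+1)%N by rewrite ltnS; apply: leq_trans (H i) (le_mdeg _ _).
exists [ffun i => Ordinal (Hb i)].
  by rewrite mem_enum inE; apply/forallP => i; rewrite ffunE; apply: H.
by apply/ffunP => i; rewrite !ffunE.
Qed.

Lemma sum_box mu (s : seq mono) (F : mono -> k) : uniq s -> (forall b, (b \in s) = mle b mu) ->
  \sum_(b <- s) F b = \sum_(b <- box mu) F b.
Proof.
move=> us ms; apply: perm_big; apply: uniq_perm => //; first exact: box_uniq.
by move=> b; rewrite ms mem_box.
Qed.

Lemma msubK a b : mle b a -> msub a (msub a b) = b.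
Proof. by move=> /forallP H; apply/ffunP => i; rewrite !ffunE subKn. Qed.

Lemma pmulC g h mu : pmul g h mu = pmul h g mu.
Proof.
rewrite !pmulE -(sum_box (s := map (msub mu) (box mu))).
- rewrite big_map; apply: eq_big_seq => b; rewrite mem_box => Hb.
  by rewrite msubK // mulrC.
- rewrite map_inj_in_uniq ?box_uniq // => a b; rewrite !mem_box => Ha Hb E.
  by rewrite -(msubK Ha) E msubK.
move=> c; apply/mapP/idP => [[b]|Hc].
  by rewrite mem_box => _ ->; apply/forallP => i; rewrite ffunE leq_subr.
exists (msub mu c); last by rewrite msubK.
by rewrite mem_box; apply/forallP => i; rewrite ffunE leq_subr.
Qed.

Definition pone : mono -> k := fun mu => (mu == mono0 N)%:R.

Lemma pmul1 g mu : pmul g pone mu = g mu.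
Proof.
have Hm : mu \in box mu by rewrite mem_box; apply/forallP.
rewrite pmulE (bigD1_seq mu) ?box_uniq //= big1_seq ?addr0.
  rewrite /pone; have -> : msub mu mu == mono0 N.
    by apply/eqP/ffunP => i; rewrite !ffunE subnn.
  by rewrite mulr1.
move=> b /andP[nb]; rewrite mem_box => /forallP Hb.
rewrite /pone; case: eqP => [E|]; last by rewrite mulr0.
case/eqP: nb; apply/ffunP => i; have := congr1 (fun f : mono => f i) E.
by rewrite !ffunE => /eqP; rewrite subn_eq0 => H; apply/eqP; rewrite eqn_leq H Hb.
Qed.

Lemma pmulA g h l mu : pmul (pmul g h) l mu = pmul g (pmul h l) mu.
Proof.
rewrite !pmulE.
under eq_big_seq => a.
  rewrite mem_box => Ha.
  rewrite pmulE -(sum_box (s := [seq b <- box mu | mle b a])); last first.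
  - move=> b; rewrite mem_filter mem_box; apply/andP/idP => [[]//|Hb]; split=> //.
    by apply/forallP => i; rewrite (leq_trans (forallP Hb i) (forallP Ha i)).
  - by rewrite filter_uniq ?box_uniq.
  rewrite big_filter mulr_suml.
  over.
rewrite (exchange_big_dep xpredT) //=.
apply: eq_big_seq => b; rewrite mem_box => Hb.
rewrite pmulE mulr_sumr -big_filter.
rewrite (perm_big [seq madd b c | c <- box (msub mu b)]); last first.
  apply: uniq_perm.
  + by rewrite filter_uniq ?box_uniq.
  + rewrite map_inj_uniq ?box_uniq // => c d /ffunP E; apply/ffunP => i.
    by have := E i; rewrite !ffunE => /addnI.
  move=> a; rewrite mem_filter mem_box; apply/andP/mapP => [[Hba Ham]|[c]].
    exists (msub a b); first by rewrite mem_box; apply/forallP => i; rewrite !ffunE leq_sub2r ?(forallP Ham).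
    by apply/ffunP => i; rewrite !ffunE subnKC ?(forallP Hba).
  rewrite mem_box => /forallP Hc ->; split; apply/forallP => i; rewrite !ffunE ?leq_addr //.
  by rewrite -leq_subRL ?(forallP Hb) //; have := Hc i; rewrite ffunE.
rewrite big_map; apply: eq_bigr => c _.
have -> : msub (msub mu b) c = msub mu (madd b c).
  by apply/ffunP => i; rewrite !ffunE subnDA.
have -> : msub (madd b c) b = c.
  by apply/ffunP => i; rewrite !ffunE addKn.
by rewrite mulrA.
Qed.


Lemma pmul_ext g g' h h' mu : (forall x, g x = g' x) -> (forall x, h x = h' x) ->
  pmul g h mu = pmul g' h' mu.
Proof. by move=> E1 E2; apply: eq_bigr => al _; rewrite E1 E2. Qed.

Lemma pmulDl g1 g2 h mu : pmul (fun x => g1 x + g2 x) h mu = pmul g1 h mu + pmul g2 h mu.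
Proof. by rewrite /pmul -big_split; apply: eq_bigr => al _; rewrite mulrDl. Qed.

Lemma pmulNl g h mu : pmul (fun x => - g x) h mu = - pmul g h mu.
Proof. by rewrite /pmul -sumrN; apply: eq_bigr => al _; rewrite mulNr. Qed.

Lemma pmul0l g h mu : (forall x, g x = 0) -> pmul g h mu = 0.
Proof. by move=> E; rewrite /pmul big1 // => al _; rewrite E mul0r. Qed.

Lemma pmul_suml (c : 'I_N -> mono -> k) h mu :
  pmul (fun x => \sum_(i < N) c i x) h mu = \sum_(i < N) pmul (c i) h mu.
Proof.
rewrite /pmul exchange_big /=; apply: eq_bigr => al _.
by rewrite mulr_suml.
Qed.

Lemma pmul_sumr (c : 'I_N -> mono -> k) h mu :
  pmul h (fun x => \sum_(i < N) c i x) mu = \sum_(i < N) pmul h (c i) mu.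
Proof. by rewrite pmulC pmul_suml; apply: eq_bigr => i _; rewrite pmulC. Qed.

Lemma pmulDr g h1 h2 mu : pmul g (fun x => h1 x + h2 x) mu = pmul g h1 mu + pmul g h2 mu.
Proof. by rewrite pmulC pmulDl !(pmulC g). Qed.

Lemma pmulNr g h mu : pmul g (fun x => - h x) mu = - pmul g h mu.
Proof. by rewrite pmulC pmulNl pmulC. Qed.

Variable xb : 'I_N -> mono -> k.

Definition Iset (g : mono -> k) :=
  exists c : 'I_N -> mono -> k, forall mu, g mu = \sum_(i < N) pmul (c i) (xb i) mu.

Lemma I_ext g g' : Iset g -> (forall x, g x = g' x) -> Iset g'.
Proof. by move=> [c Hc] E; exists c => mu; rewrite -E. Qed.

Lemma I0 : Iset (fun _ => 0).
Proof.
exists (fun _ _ => 0) => mu; rewrite big1 // => i _; exact: pmul0l.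
Qed.

Lemma I_add g1 g2 : Iset g1 -> Iset g2 -> Iset (fun x => g1 x + g2 x).
Proof.
move=> [c1 H1] [c2 H2]; exists (fun i x => c1 i x + c2 i x) => mu.
by rewrite H1 H2 -big_split; apply: eq_bigr => i _; rewrite pmulDl.
Qed.

Lemma I_opp g : Iset g -> Iset (fun x => - g x).
Proof.
move=> [c H]; exists (fun i x => - c i x) => mu.
by rewrite H -sumrN; apply: eq_bigr => i _; rewrite pmulNl.
Qed.

Lemma I_mull a g : Iset g -> Iset (pmul a g).
Proof.
move=> [c H]; exists (fun i => pmul a (c i)) => mu.
rewrite (pmul_ext (g' := a) (h' := fun x => \sum_(i < N) pmul (c i) (xb i) x)) //.
by rewrite pmul_sumr; apply: eq_bigr => i _; rewrite pmulA.
Qed.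

Lemma I_mulr a g : Iset g -> Iset (pmul g a).
Proof. by move=> /(I_mull a) H; apply: (I_ext H) => x; rewrite pmulC. Qed.

End S.

Section T.
Variables (k : fieldType) (N : nat) (Om X : 'M[k]_N).
Local Notation S := (series k N).
Local Notation mono := (mono N).

Definition r (u : S) : mono -> k := fun mu => u mu 0%N.

Lemma Bm0 f g mu a : Bm Om 0 f g mu a = cmul f g mu a.
Proof.
rewrite /Bm (eq_bigr (fun _ => cmul f g mu a)); last first.
  by move=> s _; rewrite big_ord0 mul1r enum_ord0.
by rewrite sumr_const card_ffun card_ord expn0.
Qed.

Lemma r_star u v mu : r (star Om u v) mu = pmul (r u) (r v) mu.
Proof.
rewrite /r /star big_ord1 /= Bm0 expn0 fact0 invr1 mul1r /cmul big_ord1.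
by [].
Qed.

Lemma diter_hbar x s mu a : diter (x :: s) (@hbar k N) mu a = 0.
Proof.
elim: s x mu a => [|y s IH] x mu a /=.
  rewrite /dpart /hbar.
  case: eqP => [E|]; last by rewrite mulr0.
  have := congr1 (fun f : mono => f x) E; by rewrite !ffunE eqxx addn1.
move: (IH y) => /= IHy.
by rewrite {1}/dpart IHy mulr0.
Qed.

Lemma Bm_hbar m w mu a : Bm Om m.+1 (@hbar k N) w mu a = 0.
Proof.
rewrite /Bm big1 // => s _.
case E: [seq (s l).1 | l <- enum 'I_m.+1] => [|x t].
  by have := congr1 size E; rewrite size_map size_enum_ord.
rewrite /cmul [X in _ * X]big1 ?mulr0 // => a1 _; rewrite big1 // => al _.
by rewrite diter_hbar mul0r.
Qed.

Lemma star_hbar_cmul w mu a : star Om (@hbar k N) w mu a = cmul (@hbar k N) w mu a.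
Proof.
rewrite /star big_ord_recl /= Bm0 expn0 fact0 invr1 mul1r subn0 big1 ?addr0 //.
by move=> i _; rewrite /bump /= Bm_hbar mulr0.
Qed.

Lemma hbar0 f : @hbar k N f 0%N = 0.
Proof. by rewrite /hbar andbF. Qed.

Lemma cmul_hbar w mu a : cmul (@hbar k N) w mu a = if a is a'.+1 then w mu a' else 0.
Proof.
case: a => [|a].
  by rewrite /cmul big_ord1 big1 // => al _; rewrite hbar0 mul0r.
rewrite /cmul big_ord_recl big1 ?add0r; last by move=> al _; rewrite hbar0 mul0r.
rewrite big_ord_recl [X in _ + X]big1 ?addr0; last first.
  by move=> i _; rewrite big1 // => al _; rewrite /hbar /= andbF mul0r.
have P0 : [forall i, ((([ffun => ord0] : {ffun 'I_N -> 'I_(mdeg mu).+1}) i) <= mu i)%N].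
  by apply/forallP => i; rewrite ffunE.
rewrite (bigD1 _ P0) /= big1 ?addr0; last first.
  move=> al /andP[_ ne]; rewrite /hbar.
  case: eqP => [E|]; last by rewrite mul0r.
  case/eqP: ne; apply/ffunP => i; have := congr1 (fun f : mono => f i) E.
  by rewrite !ffunE => H; apply: val_inj.
rewrite /hbar /=.
have -> : [ffun i => nat_of_ord (([ffun => ord0] : {ffun 'I_N -> 'I_(mdeg mu).+1}) i)] == mono0 N.
  by apply/eqP/ffunP => i; rewrite !ffunE.
have -> : [ffun i => (mu i - ([ffun => ord0] : {ffun 'I_N -> 'I_(mdeg mu).+1}) i)%N] = mu.
  by apply/ffunP => i; rewrite !ffunE subn0.
by rewrite mul1r subn1.
Qed.

Lemma hbar_div (z : S) : (forall mu, z mu 0%N = 0) -> z = star Om (@hbar k N) (fun mu a => z mu a.+1).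
Proof.
move=> H; apply: functional_extensionality => mu; apply: functional_extensionality => a.
by rewrite star_hbar_cmul cmul_hbar; case: a => [|a] //; rewrite H.
Qed.

Definition d1 : nat -> k := fun i => (i == 1%N)%:R.

Lemma hscale_div (z : S) : (forall mu, z mu 0%N = 0) -> z = hscale d1 (fun mu a => z mu a.+1).
Proof.
move=> H; apply: functional_extensionality => mu; apply: functional_extensionality => a.
rewrite /hscale /d1; case: a => [|a].
  by rewrite big_ord1 mul0r H.
rewrite big_ord_recl mul0r add0r big_ord_recl /= mul1r big1 ?addr0 ?subn1 //.
by move=> i _; rewrite mul0r.
Qed.

Definition xb (i : 'I_N) : mono -> k := r (lin (row i X)).

Lemma r_big (F : 'I_N -> S) mu :
  r (\big[@sadd k N/@szero k N]_(i < N) F i) mu = \sum_(i < N) r (F i) mu.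
Proof.
by elim/big_rec2: _ => // i y1 y2 _ <-.
Qed.

Lemma DX_I u : DX Om X u -> Iset xb (r u).
Proof.
move=> [w ->]; exists (fun i => r (w i)) => mu.
by rewrite r_big; apply: eq_bigr => i _; rewrite r_star.
Qed.

Lemma eqM_I u v : eqM Om X u v -> Iset xb (fun mu => r u mu - r v mu).
Proof. by move/DX_I. Qed.

Definition lift (g : mono -> k) : S := fun mu a => (a == 0%N)%:R * g mu.

Lemma I_DX g : Iset xb g -> exists v, DX Om X v /\ forall mu, r v mu = g mu.
Proof.
move=> [c Hc]; exists (\big[@sadd k N/@szero k N]_(i < N) star Om (lift (c i)) (lin (row i X))).
split; first by exists (fun i => lift (c i)).
move=> mu; rewrite r_big Hc; apply: eq_bigr => i _; rewrite r_star.
by apply: pmul_ext => x //; rewrite /r /lift mul1r.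
Qed.

Lemma I_Jset u : Iset xb (r u) -> Jset Om X u.
Proof.
move=> /I_DX [v [Dv Hv]]; exists v; split => //.
exists (fun mu a => ssub u v mu a.+1); apply: hbar_div => mu.
by rewrite /ssub /sadd /sopp -/(r v mu) Hv subrr.
Qed.

Lemma Jset_I u : Jset Om X u -> Iset xb (r u).
Proof.
move=> [v [/DX_I Dv [w Hw]]]; apply: (I_ext Dv) => mu.
have := congr1 (fun f : S => f mu 0%N) Hw.
rewrite -[star _ _ _ mu 0%N]/(r (star Om (@hbar k N) w) mu) r_star pmul0l; last by move=> x; rewrite /r hbar0.
by rewrite /ssub /sadd /sopp /r => /eqP; rewrite subr_eq0 => /eqP.
Qed.

End T.

Section U.
Variables (k : fieldType) (N : nat) (Om X : 'M[k]_N).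
Local Notation S := (series k N).
Local Notation mono := (mono N).
Local Notation I := (Iset (xb X)).

Lemma r_hscale c (u : S) mu : r (hscale c u) mu = c 0%N * u mu 0%N.
Proof. by rewrite /r /hscale big_ord1. Qed.

Lemma P_lemma (F : S -> S) : Mmap Om X F -> Mhlinear Om X F ->
  forall v, I (r v) -> I (r (F v)).
Proof.
move=> Mm [Had Hsc] v /(I_DX Om) [v' [Dv' Hv']].
pose z := ssub v v'.
have Hz : forall mu, z mu 0%N = 0.
  by move=> mu; rewrite /z /ssub /sadd /sopp -/(r v' mu) Hv' subrr.
pose w : S := fun mu a => z mu a.+1.
pose h := hscale (d1 k) w.
have Ev : v = sadd v' h.
  rewrite /h /w -(hscale_div Hz); apply: functional_extensionality => mu.
  apply: functional_extensionality => a; rewrite /z /sadd /ssub /sopp.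
  by rewrite addrC subrK.
have H1 := eqM_I (Had v' h).
have H2 := eqM_I (Hsc (d1 k) w).
have H3 : I (fun mu => r (F v') mu - r (F (@szero k N)) mu).
  apply: (eqM_I (u := F v')); apply: Mm.
rewrite /eqM.   have -> : ssub v' (@szero k N) = v'.
    apply: functional_extensionality => mu; apply: functional_extensionality => a.
    by rewrite /ssub /sadd /sopp /szero oppr0 addr0.
  exact: Dv'.
have H4 := eqM_I (Had (@szero k N) (@szero k N)).
have E0 : sadd (@szero k N) (@szero k N) = @szero k N.
  apply: functional_extensionality => mu; apply: functional_extensionality => a.
  by rewrite /sadd /szero addr0.
rewrite E0 in H4.
have := I_add (I_add (I_add H1 H3) (I_opp H4)) H2.
move/I_ext; apply=> mu; rewrite Ev.
rewrite r_hscale /d1 /= mul0r.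
rewrite /r /sadd; ring.
Qed.

Lemma r_sone_mul (g : mono -> k) mu : pmul g (r (@sone k N)) mu = g mu.
Proof.
rewrite -(pmul1 g mu); apply: pmul_ext => // x.
by rewrite /r /sone /pone andbT.
Qed.

Lemma pmulBr (g h1 h2 : mono -> k) mu : pmul g (fun x => h1 x - h2 x) mu = pmul g h1 mu - pmul g h2 mu.
Proof. by rewrite (pmulDr g h1 (fun x => - h2 x)) pmulNr. Qed.

Lemma autJ fD fM : AutDM Om X fD fM -> AutD_J Om X fD.
Proof.
move=> [AD [Mm Mh [Minj Msurj] Mc Hmul]]; split => // u /Jset_I Iu.
apply: (I_Jset Om).
have [m0 Hm0] := Msurj (@sone k N).
have I1 : I (r (star Om u m0)).
  by apply: (I_ext (I_mulr (r m0) Iu)) => mu; rewrite r_star.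
have I2 := P_lemma Mm Mh I1.
have I3 := eqM_I (Hmul u m0).
have I5 := I_mull (r (fD u)) (eqM_I Hm0).
have := I_add (I_add I2 (I_opp I3)) (I_opp I5).
move/I_ext; apply=> mu.
rewrite pmulBr r_sone_mul r_star; ring.
Qed.

Lemma derJ dD dM : DerDM Om X dD dM -> DerD_J Om X dD.
Proof.
move=> [DD [Mm Mh Mc Hd]]; split => // u /Jset_I Iu.
apply: (I_Jset Om).
have I1 : I (r (star Om u (@sone k N))).
  by apply: (I_ext (I_mulr (r (@sone k N)) Iu)) => mu; rewrite r_star.
have I2 := P_lemma Mm Mh I1.
have I3 := eqM_I (Hd u (@sone k N)).
have I4 : I (r (star Om u (dM (@sone k N)))).
  by apply: (I_ext (I_mulr (r (dM (@sone k N))) Iu)) => mu; rewrite r_star.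
have := I_add (I_add I2 (I_opp I3)) (I_opp I4).
move/I_ext; apply=> mu.
rewrite /r /sadd -!/(r _ _) r_star r_sone_mul; ring.
Qed.

End U.

Unset Implicit Arguments.

Theorem lemma3p2 (k : fieldType) (n : nat) (Om X : 'M[k]_(n.*2)) :
  [pchar k] =i pred0 ->
  symplectic Om ->
  lagrangian Om X ->
  (forall fD fM : series k n.*2 -> series k n.*2,
      AutDM Om X fD fM -> AutD_J Om X fD) /\
  (forall dD dM : series k n.*2 -> series k n.*2,
      DerDM Om X dD dM -> DerD_J Om X dD).
Proof.
move=> _ _ _; split.
- by move=> fD fM; apply: autJ.
- by move=> dD dM; apply: derJ.
Qed.
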